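(* Let $a,c,p\in\mathbb{C}$ with $-c\notin\mathbb{N}\cup\{0\}$ and $c\neq2$. Write $\cos(pz)M(a,c;z)=\sum_{n=0}^\infty u_nz^n$, $z\in\mathbb{C}$. Then $u_0=1$, $u_1=\frac ac$, $u_2=\frac12\left(\frac{a^2+a}{c^2+c}-p^2\right)$, $u_3=\frac{a}{6c}\left(\frac{(a+1)(a+2)}{(c+1)(c+2)}-3p^2\right)$, \[ u_4=\frac1{24}\left(-\frac{6a(a+1)p^2}{c(c+1)}+\frac{a(a+1)(a+2)(a+3)}{c(c+1)(c+2)(c+3)}+p^4\right), \] \[ u_5=\frac{a}{120c}\left(-\frac{10(a+1)(a+2)p^2}{(c+1)(c+2)}+\frac{(a+1)(a+2)(a+3)(a+4)}{(c+1)(c+2)(c+3)(c+4)}+5p^4\right), \] and for all integers $n\ge5$, \[ u_{n+1}=\sum_{i=0}^5\beta_i(n)u_{n-i}, \] where, with $D(n)=(c-2)c\,n(n+1)(c+n-1)(c+n)$, \[ \beta_0(n)=\frac{2\left(a\left(c^2-2cn+c-2(n-2)^2\right)+c(n-1)(2c+n-5)\right)}{(c-2)c(n+1)(c+n)}, \] \[ \beta_1(n)=\frac{1}{D(n)}\Big[-(n-4)(n-3)(n-2)(n-1)(4p^2+1)+2(n-3)(n-2)(n-1)\big(4a-c(4p^2+3)\big) +(n-2)(n-1)\big(8a^2+a(4c+6)-6c((c-2)p^2+c)+c\big) +2(n-1)\big(a^2(4c-2)-3a(c-1)c+c(-c^2+c+2)p^2\big) -(c-2)\big(a^2(c+2)-ac+c^2(c+1)p^2\big)\Big],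 \] \[ \beta_2(n)=\frac{1}{D(n)}\Big[-2p^2(c-3)\big(a(3c+8)-2c^2+c-32\big)+2p^2\big(n(-10a+c(3c-31)+104)+6(c-6)n^2+4n^3\big) -2(a+n-3)\big(2a^2-a(c-2n+3)-(n-2)(2c+n-4)\big)\Big], \] \[ \beta_3(n)=-\frac{1}{D(n)}\Big[p^2\big(12a^2-2a(6c+5)+c(6c-1)\big)+2(n-3)\big(a+c(4p^2+3)p^2\big) +(a-1)a+5(c-2)cp^4+(n-4)(n-3)(8p^4+6p^2+1)\Big], \] \[ \beta_4(n)=\frac{2p^2\left(p^2(-6a+5c+4(n-4))-3a+2c+n-4\right)}{D(n)},\qquad \beta_5(n)=-\frac{p^2(4p^4+5p^2+1)}{D(n)}. \]
   Context: For $a\in\mathbb{C}$, $(a)_n=a(a+1)\cdots(a+n-1)$ denotes the Pochhammer symbol, with $(a)_0=1$. For $a,c\in\mathbb{C}$ with $-c\notin\mathbb{N}\cup\{0\}$, the confluent hypergeometric (Kummer) function is $M(a,c;z)=\sum_{n=0}^\infty \frac{(a)_n}{(c)_n\,n!}z^n$, $z\in\mathbb{C}$. *)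

(* Defs.v *)
From Stdlib Require Import Reals Factorial.
From Coquelicot Require Import Coquelicot.

Open Scope C_scope.

Definition csum (a : nat -> C) : C :=
  @lim C_CompleteNormedModule (filtermap (fun N => @sum_n C_AbelianMonoid a N) eventually).

Definition nC (n : nat) : C := RtoC (INR n).

Fixpoint poch (a : C) (n : nat) : C :=
  match n with
  | O => 1
  | S k => poch a k * (a + nC k)
  end.

Definition kummerM (a c z : C) : C :=
  csum (fun n => poch a n / (poch c n * nC (fact n)) * z ^ n).

Definition ccos (w : C) : C :=
  csum (fun k => (-1) ^ k * w ^ (2 * k) / nC (fact (2 * k))).

Definition Dn (c : C) (n : nat) : C :=
  (c - 2) * c * nC n * (nC n + 1) * (c + nC n - 1) * (c + nC n).

Definition beta0 (a c : C) (n : nat) : C :=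
  2 * (a * (c ^ 2 - 2 * c * nC n + c - 2 * (nC n - 2) ^ 2)
       + c * (nC n - 1) * (2 * c + nC n - 5))
  / ((c - 2) * c * (nC n + 1) * (c + nC n)).

Definition beta1 (a c p : C) (n : nat) : C :=
  let N := nC n in
  ( - (N - 4) * (N - 3) * (N - 2) * (N - 1) * (4 * p ^ 2 + 1)
    + 2 * (N - 3) * (N - 2) * (N - 1) * (4 * a - c * (4 * p ^ 2 + 3))
    + (N - 2) * (N - 1) * (8 * a ^ 2 + a * (4 * c + 6) - 6 * c * ((c - 2) * p ^ 2 + c) + c)
    + 2 * (N - 1) * (a ^ 2 * (4 * c - 2) - 3 * a * (c - 1) * c + c * (- c ^ 2 + c + 2) * p ^ 2)
    - (c - 2) * (a ^ 2 * (c + 2) - a * c + c ^ 2 * (c + 1) * p ^ 2) )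
  / Dn c n.

Definition beta2 (a c p : C) (n : nat) : C :=
  let N := nC n in
  ( - 2 * p ^ 2 * (c - 3) * (a * (3 * c + 8) - 2 * c ^ 2 + c - 32)
    + 2 * p ^ 2 * (N * (- 10 * a + c * (3 * c - 31) + 104) + 6 * (c - 6) * N ^ 2 + 4 * N ^ 3)
    - 2 * (a + N - 3) * (2 * a ^ 2 - a * (c - 2 * N + 3) - (N - 2) * (2 * c + N - 4)) )
  / Dn c n.

Definition beta3 (a c p : C) (n : nat) : C :=
  let N := nC n in
  - ( p ^ 2 * (12 * a ^ 2 - 2 * a * (6 * c + 5) + c * (6 * c - 1))
      + 2 * (N - 3) * (a + c * (4 * p ^ 2 + 3) * p ^ 2)
      + (a - 1) * a + 5 * (c - 2) * c * p ^ 4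
      + (N - 4) * (N - 3) * (8 * p ^ 4 + 6 * p ^ 2 + 1) )
  / Dn c n.

Definition beta4 (a c p : C) (n : nat) : C :=
  2 * p ^ 2 * (p ^ 2 * (- 6 * a + 5 * c + 4 * (nC n - 4)) - 3 * a + 2 * c + nC n - 4)
  / Dn c n.

Definition beta5 (a c p : C) (n : nat) : C :=
  - (p ^ 2 * (4 * p ^ 4 + 5 * p ^ 2 + 1)) / Dn c n.

(* Main.v *)
Require Import Defs.
From Stdlib Require Import Reals Factorial Lia Lra Psatz.
From Coquelicot Require Import Coquelicot.
Open Scope C_scope.
Lemma eq_of_sub (x y : C) : x - y = 0 -> x = y.
Proof. intro H. rewrite <- (Cplus_0_l y), <- H. ring. Qed.

Lemma nC_S n : nC (S n) = nC n + 1.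
Proof. unfold nC. rewrite S_INR. now rewrite RtoC_plus. Qed.
Lemma nC_0 : nC 0 = 0.
Proof. reflexivity. Qed.
Lemma RtoC_inj (x y : R) : RtoC x = RtoC y -> x = y.
Proof. intro H. now injection H. Qed.
Lemma nC_fact_neq0 n : nC (fact n) <> 0.
Proof. intro H. apply (INR_fact_neq_0 n). now apply RtoC_inj. Qed.
Lemma nC_S_neq0 n : nC (S n) <> 0.
Proof. intro H. apply (not_O_INR (S n)); [lia|]. now apply RtoC_inj. Qed.
Lemma nC_mult m n : nC (m * n) = nC m * nC n.
Proof. unfold nC. rewrite mult_INR. now rewrite RtoC_mult. Qed.

Fixpoint sC (f : nat -> C) (n : nat) : C :=
  match n with O => f O | S k => sC f k + f (S k) end.
Lemma sC_sum (f : nat -> C) n : @sum_n C_AbelianMonoid f n = sC f n.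
Proof. induction n. - now rewrite sum_O. - rewrite sum_Sn, IHn. reflexivity. Qed.
Lemma sumC_S (f : nat -> C) n : sC f (S n) = sC f n + f (S n).
Proof. reflexivity. Qed.
Lemma sumC_0 (f : nat -> C) : sC f 0 = f 0%nat.
Proof. reflexivity. Qed.
Lemma sumC_ext (f g : nat -> C) n : (forall k, (k <= n)%nat -> f k = g k) -> sC f n = sC g n.
Proof. induction n; intro H; simpl. - apply H; lia. - rewrite IHn, H; auto. Qed.
Lemma sumC_plus (f g : nat -> C) n : sC (fun k => f k + g k) n = sC f n + sC g n.
Proof. induction n. - reflexivity. - simpl. rewrite IHn. ring. Qed.
Lemma sumC_scal (x : C) (f : nat -> C) n : sC (fun k => x * f k) n = x * sC f n.
Proof. induction n. - reflexivity. - simpl. rewrite IHn. ring. Qed.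
Lemma sumC_Sl (f : nat -> C) n : sC f (S n) = f 0%nat + sC (fun k => f (S k)) n.
Proof. induction n. - simpl. ring. - rewrite sumC_S, IHn. simpl. ring. Qed.

Definition conv (x y : nat -> C) (n : nat) : C :=
  sC (fun k => x k * y (n - k)%nat) n.
Definition th (x : nat -> C) (n : nat) : C := nC n * x n.
Definition sh (x : nat -> C) (n : nat) : C := match n with O => 0 | S k => x k end.

Lemma conv_ext_r x y y' n : (forall i, y i = y' i) -> conv x y n = conv x y' n.
Proof. intro H. unfold conv. apply sumC_ext. intros. now rewrite H. Qed.
Lemma conv_ext_l x x' y n : (forall i, x i = x' i) -> conv x y n = conv x' y n.
Proof. intro H. unfold conv. apply sumC_ext. intros. now rewrite H. Qed.
Lemma conv_plus_r x y z n : conv x (fun i => y i + z i) n = conv x y n + conv x z n.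
Proof. unfold conv. rewrite <- sumC_plus. apply sumC_ext. intros. ring. Qed.
Lemma conv_plus_l x y z n : conv (fun i => y i + z i) x n = conv y x n + conv z x n.
Proof. unfold conv. rewrite <- sumC_plus. apply sumC_ext. intros. ring. Qed.
Lemma conv_scal_r x y (s : C) n : conv x (fun i => s * y i) n = s * conv x y n.
Proof. unfold conv. rewrite <- sumC_scal. apply sumC_ext. intros. ring. Qed.
Lemma conv_scal_l x y (s : C) n : conv (fun i => s * y i) x n = s * conv y x n.
Proof. unfold conv. rewrite <- sumC_scal. apply sumC_ext. intros. ring. Qed.
Lemma conv_sh_r x y n : conv x (sh y) (S n) = conv x y n.
Proof. unfold conv. rewrite sumC_S, Nat.sub_diag.
  transitivity (sC (fun k => x k * y (n - k)%nat) n + x (S n) * 0); [|ring].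
  f_equal. apply sumC_ext. intros k Hk.
  replace (S n - k)%nat with (S (n - k)) by lia. reflexivity. Qed.
Lemma conv_sh_l x y n : conv (sh x) y (S n) = conv x y n.
Proof. unfold conv. rewrite sumC_Sl.
  transitivity (0 * y (S n - 0)%nat + sC (fun k => x k * y (n - k)%nat) n); [|ring].
  f_equal. Qed.
Lemma conv_sh_r' x y n : conv x (sh y) n = sh (conv x y) n.
Proof. destruct n. - unfold conv. rewrite sumC_0. simpl. ring. - apply conv_sh_r. Qed.
Lemma conv_sh_l' x y n : conv (sh x) y n = sh (conv x y) n.
Proof. destruct n. - unfold conv. rewrite sumC_0. simpl. ring. - apply conv_sh_l. Qed.
Lemma nC_sub n k : (k <= n)%nat -> nC (n - k) = nC n - nC k.
Proof. intro H. unfold nC. rewrite minus_INR by lia. now rewrite RtoC_minus. Qed.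
Lemma conv_leib x y n : nC n * conv x y n = conv (th x) y n + conv x (th y) n.
Proof. unfold conv, th. rewrite <- sumC_scal, <- sumC_plus. apply sumC_ext. intros k Hk.
  rewrite nC_sub by lia. ring. Qed.

Lemma nC_S' n : nC n + 1 = nC (S n).
Proof. now rewrite nC_S. Qed.
Ltac nz := cbv beta in *; repeat split;
  repeat rewrite nC_S';
  first [apply nC_S_neq0 | apply nC_fact_neq0 | assumption].

Definition co (p : C) (n : nat) : C :=
  if Nat.even n then (-1) ^ (Nat.div2 n) * p ^ n / nC (fact n) else 0.
Definition mk (a c : C) (n : nat) : C := poch a n / (poch c n * nC (fact n)).

Lemma poch_neq0 (c : C) (hc : forall k : nat, c <> - nC k) n : poch c n <> 0.
Proof. induction n; simpl.
  - intro H. injection H. lra.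
  - apply Cmult_neq_0; [easy|]. intro H.
    apply (hc n). rewrite <- (Cplus_0_r (- nC n)), <- H. ring. Qed.

Lemma cplus_neq0 (c : C) (hc : forall k : nat, c <> - nC k) n : c + nC n <> 0.
Proof. intro H. apply (hc n). rewrite <- (Cplus_0_r (- nC n)), <- H. ring. Qed.

Lemma co_rel p n : th (th (co p)) n = th (co p) n + (- p ^ 2) * sh (sh (co p)) n.
Proof. unfold th. destruct n as [|[|j]]; simpl sh.
  - rewrite nC_0. ring.
  - rewrite nC_S, nC_0. ring.
  - unfold co. simpl Nat.even. simpl Nat.div2.
    destruct (Nat.even j).
    + change (fact (S (S j))) with (S (S j) * fact (S j))%nat.
      change (fact (S j)) with (S j * fact j)%nat.
      rewrite !nC_mult. rewrite !nC_S.
      simpl Cpow. field. nz.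
    + ring. Qed.

Lemma mk_rel a c (hc : forall k : nat, c <> - nC k) n :
  th (th (mk a c)) n = (1 - c) * th (mk a c) n + sh (fun i => th (mk a c) i + a * mk a c i) n.
Proof. unfold th. destruct n as [|j]; simpl sh.
  - rewrite nC_0. ring.
  - unfold mk. simpl poch. change (fact (S j)) with (S j * fact j)%nat.
    rewrite nC_mult. 
    assert (H1 := nC_fact_neq0 j). assert (H2 := nC_S_neq0 j).
    assert (H3 := poch_neq0 c hc j). assert (H4 := cplus_neq0 c hc j).
    rewrite !nC_S in *. field. nz. Qed.

Section Seqs.
Variables (a c p : C).
Definition sA := conv (co p) (mk a c).
Definition sB := conv (co p) (th (mk a c)).
Definition sC' := conv (th (co p)) (mk a c).
Definition sE := conv (th (co p)) (th (mk a c)).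
End Seqs.

Lemma RA a c p n : nC n * sA a c p n = sB a c p n + sC' a c p n.
Proof. unfold sA. rewrite conv_leib. unfold sB, sC'. ring. Qed.

Lemma RB a c p (hc : forall k : nat, c <> - nC k) j :
  nC (S j) * sB a c p (S j) = sE a c p (S j) + (1 - c) * sB a c p (S j) + sB a c p j + a * sA a c p j.
Proof. unfold sB. rewrite conv_leib. fold (sE a c p (S j)).
  rewrite (conv_ext_r _ _ _ _ (mk_rel a c hc)). rewrite conv_plus_r, conv_scal_r, conv_sh_r.
  rewrite conv_plus_r, conv_scal_r. unfold sA. ring. Qed.

Lemma RC a c p j :
  nC (S (S j)) * sC' a c p (S (S j)) = sC' a c p (S (S j)) + sE a c p (S (S j)) + (- p ^ 2) * sA a c p j.
Proof. unfold sC'. rewrite conv_leib. fold (sE a c p (S (S j))).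
  rewrite (conv_ext_l _ _ _ _ (co_rel p)). rewrite conv_plus_l, conv_scal_l, !conv_sh_l.
  unfold sA. ring. Qed.

Lemma RE a c p (hc : forall k : nat, c <> - nC k) j :
  nC (S (S j)) * sE a c p (S (S j)) = sE a c p (S (S j)) + (- p ^ 2) * sB a c p j
     + (1 - c) * sE a c p (S (S j)) + sE a c p (S j) + a * sC' a c p (S j).
Proof. unfold sE. rewrite conv_leib.
  rewrite (conv_ext_l _ _ _ _ (co_rel p)). rewrite conv_plus_l, conv_scal_l, !conv_sh_l.
  rewrite (conv_ext_r _ _ _ _ (mk_rel a c hc)). rewrite conv_plus_r, conv_scal_r, conv_sh_r.
  rewrite conv_plus_r, conv_scal_r. unfold sB, sC'. ring. Qed.
Lemma cert (a c p N A0 A1 A2 A3 A4 A5 A6 B0 B1 B2 B3 B4 B5 B6 C0 C1 C2 C3 C4 C5 C6 E0 E1 E2 E3 E4 E5 E6 : C)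
  (hA2 : (N + 1 + 1) * A2 = B2 + C2)
  (hA3 : (N + 1 + 1 + 1) * A3 = B3 + C3)
  (hA4 : (N + 1 + 1 + 1 + 1) * A4 = B4 + C4)
  (hA5 : (N + 1 + 1 + 1 + 1 + 1) * A5 = B5 + C5)
  (hA6 : (N + 1 + 1 + 1 + 1 + 1 + 1) * A6 = B6 + C6)
  (hB2 : (N + 1 + 1) * B2 = E2 + (1 - c) * B2 + B1 + a * A1)
  (hB3 : (N + 1 + 1 + 1) * B3 = E3 + (1 - c) * B3 + B2 + a * A2)
  (hB4 : (N + 1 + 1 + 1 + 1) * B4 = E4 + (1 - c) * B4 + B3 + a * A3)
  (hB5 : (N + 1 + 1 + 1 + 1 + 1) * B5 = E5 + (1 - c) * B5 + B4 + a * A4)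
  (hB6 : (N + 1 + 1 + 1 + 1 + 1 + 1) * B6 = E6 + (1 - c) * B6 + B5 + a * A5)
  (hC2 : (N + 1 + 1) * C2 = C2 + E2 + (- p ^ 2) * A0)
  (hC3 : (N + 1 + 1 + 1) * C3 = C3 + E3 + (- p ^ 2) * A1)
  (hC4 : (N + 1 + 1 + 1 + 1) * C4 = C4 + E4 + (- p ^ 2) * A2)
  (hC5 : (N + 1 + 1 + 1 + 1 + 1) * C5 = C5 + E5 + (- p ^ 2) * A3)
  (hC6 : (N + 1 + 1 + 1 + 1 + 1 + 1) * C6 = C6 + E6 + (- p ^ 2) * A4)
  (hE2 : (N + 1 + 1) * E2 = E2 + (- p ^ 2) * B0 + (1 - c) * E2 + E1 + a * C1)
  (hE3 : (N + 1 + 1 + 1) * E3 = E3 + (- p ^ 2) * B1 + (1 - c) * E3 + E2 + a * C2)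
  (hE4 : (N + 1 + 1 + 1 + 1) * E4 = E4 + (- p ^ 2) * B2 + (1 - c) * E4 + E3 + a * C3)
  (hE5 : (N + 1 + 1 + 1 + 1 + 1) * E5 = E5 + (- p ^ 2) * B3 + (1 - c) * E5 + E4 + a * C4)
  (hE6 : (N + 1 + 1 + 1 + 1 + 1 + 1) * E6 = E6 + (- p ^ 2) * B4 + (1 - c) * E6 + E5 + a * C5) :
  (c - 2) * c * (N + 1 + 1 + 1 + 1 + 1) * ((N + 1 + 1 + 1 + 1 + 1) + 1) * (c + (N + 1 + 1 + 1 + 1 + 1) - 1) * (c + (N + 1 + 1 + 1 + 1 + 1)) * A6 = (320 * c ^ 2 + 80 * c ^ 3 + (- 720) * a + (- 540) * a * c + (- 50) * a * c ^ 2 + 10 * a * c ^ 3 + 160 * N * c + 264 * N * c ^ 2 + 36 * N * c ^ 3 + (- 804) * N * a + (- 398) * N * a * c + (- 20) * N * a * c ^ 2 + 2 * N * a * c ^ 3 + 112 * N ^ 2 * c + 70 * N ^ 2 * c ^ 2 + 4 * N ^ 2 * c ^ 3 + (- 332) * N ^ 2 * a + (- 98) * N ^ 2 * a * c + (- 2) * N ^ 2 * a * c ^ 2 + 26 * N ^ 3 * c + 6 * N ^ 3 * c ^ 2 + (- 60) * N ^ 3 * a + (- 8) * N ^ 3 * a * c + 2 * N ^ 4 * c + (- 4) * N ^ 4 * a) * A5 + ((- 24) + (- 96) * p ^ 2 + (- 132) * c + (- 32) * c * p ^ 2 + (- 72) * c ^ 2 + (- 62) * c ^ 2 * p ^ 2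 + (- 7) * c ^ 3 * p ^ 2 + (- 1) * c ^ 4 * p ^ 2 + 264 * a + 70 * a * c + (- 23) * a * c ^ 2 + 84 * a ^ 2 + 32 * a ^ 2 * c + (- 1) * a ^ 2 * c ^ 2 + (- 50) * N + (- 200) * N * p ^ 2 + (- 149) * N * c + (- 120) * N * c * p ^ 2 + (- 42) * N * c ^ 2 + (- 40) * N * c ^ 2 * p ^ 2 + (- 2) * N * c ^ 3 * p ^ 2 + 250 * N * a + 34 * N * a * c + (- 6) * N * a * c ^ 2 + 52 * N * a ^ 2 + 8 * N * a ^ 2 * c + (- 35) * N ^ 2 + (- 140) * N ^ 2 * p ^ 2 + (- 53) * N ^ 2 * c + (- 60) * N ^ 2 * c * p ^ 2 + (- 6) * N ^ 2 * c ^ 2 + (- 6) * N ^ 2 * c ^ 2 * p ^ 2 + 78 * N ^ 2 * a + 4 * N ^ 2 * a * c + 8 * N ^ 2 * a ^ 2 + (- 10) * N ^ 3 + (- 40) * N ^ 3 * p ^ 2 + (- 6) * N ^ 3 * c + (- 8) * N ^ 3 * c * p ^ 2 + 8 * N ^ 3 * a + (- 1) * N ^ 4 + (- 4) * N ^ 4 * p ^ 2) * A4 + (12 + 48 * p ^ 2 + 24 * c + 60 * c * p ^ 2 + 16 * c ^ 2 * p ^ 2 + 4 * c ^ 3 * p ^ 2 + (- 22) * a + (- 52) * a * p ^ 2 + 16 * a * c + 2 * a * c * p ^ 2 + (- 6) * a * c ^ 2 * p ^ 2 + (- 22) * a ^ 2 + 2 * a ^ 2 * c + (- 4) * a ^ 3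 + 22 * N + 88 * N * p ^ 2 + 20 * N * c + 58 * N * c * p ^ 2 + 6 * N * c ^ 2 * p ^ 2 + (- 14) * N * a + (- 20) * N * a * p ^ 2 + 6 * N * a * c + (- 8) * N * a ^ 2 + 12 * N ^ 2 + 48 * N ^ 2 * p ^ 2 + 4 * N ^ 2 * c + 12 * N ^ 2 * c * p ^ 2 + (- 2) * N ^ 2 * a + 2 * N ^ 3 + 8 * N ^ 3 * p ^ 2) * A3 + ((- 2) + (- 12) * p ^ 2 + (- 16) * p ^ 4 + (- 11) * c * p ^ 2 + (- 6) * c * p ^ 4 + (- 6) * c ^ 2 * p ^ 2 + (- 5) * c ^ 2 * p ^ 4 + (- 3) * a + 10 * a * p ^ 2 + 12 * a * c * p ^ 2 + (- 1) * a ^ 2 + (- 12) * a ^ 2 * p ^ 2 + (- 3) * N + (- 18) * N * p ^ 2 + (- 24) * N * p ^ 4 + (- 6) * N * c * p ^ 2 + (- 8) * N * c * p ^ 4 + (- 2) * N * a + (- 1) * N ^ 2 + (- 6) * N ^ 2 * p ^ 2 + (- 8) * N ^ 2 * p ^ 4) * A2 + (2 * p ^ 2 + 8 * p ^ 4 + 4 * c * p ^ 2 + 10 * c * p ^ 4 + (- 6) * a * p ^ 2 + (- 12) * a * p ^ 4 + 2 * N * p ^ 2 + 8 * N * p ^ 4) * A1 + ((- 1) * p ^ 2 + (- 5) * p ^ 4 + (- 4) * p ^ 6) * A0.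
Proof.
  apply eq_of_sub.
  transitivity (((- 200) * c + 10 * c ^ 2 + 35 * c ^ 3 + 5 * c ^ 4 + (- 130) * N * c + 27 * N * c ^ 2 + 17 * N * c ^ 3 + N * c ^ 4 + (- 28) * N ^ 2 * c + 10 * N ^ 2 * c ^ 2 + 2 * N ^ 2 * c ^ 3 + (- 2) * N ^ 3 * c + N ^ 3 * c ^ 2) * ((N + 1 + 1 + 1 + 1 + 1 + 1) * A6 - (B6 + C6)) + ((- 40) * c + 10 * c ^ 2 + 5 * c ^ 3 + (- 18) * N * c + 7 * N * c ^ 2 + N * c ^ 3 + (- 2) * N ^ 2 * c + N ^ 2 * c ^ 2) * ((N + 1 + 1 + 1 + 1 + 1 + 1) * B6 - (E6 + (1 - c) * B6 + B5 + a * A5)) + ((- 40) * c + 2 * c ^ 2 + 7 * c ^ 3 + c ^ 4 + (- 18) * N * c + 5 * N * c ^ 2 + 2 * N * c ^ 3 + (- 2) * N ^ 2 * c + N ^ 2 * c ^ 2) * ((N + 1 + 1 + 1 + 1 + 1 + 1) * C6 - (C6 + E6 + (- p ^ 2) * A4)) + ((- 20) * c + 8 * c ^ 2 + c ^ 3 + (- 4) * N * c + 2 * N * c ^ 2) * ((N + 1 + 1 + 1 + 1 + 1 + 1) * E6 - (E6 + (- p ^ 2) * B4 + (1 - c) * E6 + E5 + a * C5)) + ((- 64) * c ^ 2 + (- 16) * c ^ 3 + 144 * a + 100 * a * c + 12 * a * c ^ 2 + (- 1) * a * c ^ 3 + (- 32) * N * c + (- 40) * N * c ^ 2 + (- 4)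 * N * c ^ 3 + 132 * N * a + 56 * N * a * c + 3 * N * a * c ^ 2 + (- 16) * N ^ 2 * c + (- 6) * N ^ 2 * c ^ 2 + 40 * N ^ 2 * a + 8 * N ^ 2 * a * c + (- 2) * N ^ 3 * c + 4 * N ^ 3 * a) * ((N + 1 + 1 + 1 + 1 + 1) * A5 - (B5 + C5)) + ((- 10) * c + (- 11) * c ^ 2 + 36 * a + 16 * a * c + (- 1) * a * c ^ 2 + (- 10) * N * c + (- 3) * N * c ^ 2 + 24 * N * a + 4 * N * a * c + (- 2) * N ^ 2 * c + 4 * N ^ 2 * a) * ((N + 1 + 1 + 1 + 1 + 1) * B5 - (E5 + (1 - c) * B5 + B4 + a * A4)) + ((- 10) * c + (- 3) * c ^ 2 + 24 * a + 4 * a * c + (- 4) * N * c + 8 * N * a) * ((N + 1 + 1 + 1 + 1 + 1) * E5 - (E5 + (- p ^ 2) * B3 + (1 - c) * E5 + E4 + a * C4)) + ((- 16) * c ^ 2 + (- 4) * c ^ 3 + 36 * a + 20 * a * c + 5 * a * c ^ 2 + (- 8) * N * c + (- 6) * N * c ^ 2 + 24 * N * a + 8 * N * a * c + (- 2) * N ^ 2 * c + 4 * N ^ 2 * a) * ((N + 1 + 1 + 1 + 1 + 1) * C5 - (C5 + E5 + (- p ^ 2) * A3)) + (6 + 24 * p ^ 2 + 33 * c + 18 * c * p ^ 2 + 18 * c ^ 2 + 15 * c ^ 2 * p ^ 2 + (- 66) * a + (- 20) * a * c + 3 * a * c ^ 2 + (- 12) * a ^ 2 + (- 4) * a ^ 2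 * c + 11 * N + 44 * N * p ^ 2 + 29 * N * c + 30 * N * c * p ^ 2 + 6 * N * c ^ 2 + 5 * N * c ^ 2 * p ^ 2 + (- 46) * N * a + (- 6) * N * a * c + (- 4) * N * a ^ 2 + 6 * N ^ 2 + 24 * N ^ 2 * p ^ 2 + 6 * N ^ 2 * c + 8 * N ^ 2 * c * p ^ 2 + (- 8) * N ^ 2 * a + N ^ 3 + 4 * N ^ 3 * p ^ 2) * ((N + 1 + 1 + 1 + 1) * A4 - (B4 + C4)) + (2 + 8 * p ^ 2 + 7 * c + 10 * c * p ^ 2 + (- 1) * c ^ 2 * p ^ 2 + (- 10) * a + 2 * a * c + (- 4) * a ^ 2 + 3 * N + 12 * N * p ^ 2 + 3 * N * c + 4 * N * c * p ^ 2 + (- 4) * N * a + N ^ 2 + 4 * N ^ 2 * p ^ 2) * ((N + 1 + 1 + 1 + 1) * B4 - (E4 + (1 - c) * B4 + B3 + a * A3)) + (2 + 8 * p ^ 2 + 3 * c + 4 * c * p ^ 2 + (- 4) * a + 2 * N + 8 * N * p ^ 2) * ((N + 1 + 1 + 1 + 1) * E4 - (E4 + (- p ^ 2) * B2 + (1 - c) * E4 + E3 + a * C3)) + (2 + 8 * p ^ 2 + 11 * c + 6 * c * p ^ 2 + 6 * c ^ 2 + 5 * c ^ 2 * p ^ 2 + (- 22) * a + (- 10) * a * c + 4 * a ^ 2 + 3 * N + 12 * N * p ^ 2 + 6 * N * c + 8 * N * c * p ^ 2 + (- 8) * N * a + N ^ 2 + 4 * N ^ 2 * p ^ 2) * ((N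 + 1 + 1 + 1 + 1) * C4 - (C4 + E4 + (- p ^ 2) * A2)) + ((- 4) + (- 16) * p ^ 2 + (- 8) * c + (- 20) * c * p ^ 2 + 8 * a + 8 * a * p ^ 2 + (- 3) * a * c + (- 4) * a * c * p ^ 2 + 4 * a ^ 2 + (- 6) * N + (- 24) * N * p ^ 2 + (- 4) * N * c + (- 10) * N * c * p ^ 2 + 3 * N * a + (- 2) * N ^ 2 + (- 8) * N ^ 2 * p ^ 2) * ((N + 1 + 1 + 1) * A3 - (B3 + C3)) + ((- 1) + (- 4) * p ^ 2 + 2 * c * p ^ 2 + (- 1) * a + (- 8) * a * p ^ 2 + (- 1) * N + (- 4) * N * p ^ 2) * ((N + 1 + 1 + 1) * B3 - (E3 + (1 - c) * B3 + B2 + a * A2)) + ((- 1) + (- 4) * p ^ 2) * ((N + 1 + 1 + 1) * E3 - (E3 + (- p ^ 2) * B1 + (1 - c) * E3 + E2 + a * C2)) + ((- 2) + (- 8) * p ^ 2 + (- 4) * c + (- 10) * c * p ^ 2 + 5 * a + 8 * a * p ^ 2 + (- 2) * N + (- 8) * N * p ^ 2) * ((N + 1 + 1 + 1) * C3 - (C3 + E3 + (- p ^ 2) * A1)) + (1 + 5 * p ^ 2 + 4 * p ^ 4 + a + 4 * a * p ^ 2 + N + 5 * N * p ^ 2 + 4 * N * p ^ 4) * ((N + 1 + 1) * A2 - (B2 + C2)) + ((- 1) * p ^ 2 + (- 4) * p ^ 4) * ((N + 1 + 1) * B2 - (E2 + (1 - c) * B2 + B1 + a * A1)) + (1 + 5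 * p ^ 2 + 4 * p ^ 4) * ((N + 1 + 1) * C2 - (C2 + E2 + (- p ^ 2) * A0))).
  - ring.
  - rewrite hA2; rewrite hA3; rewrite hA4; rewrite hA5; rewrite hA6; rewrite hB2; rewrite hB3; rewrite hB4; rewrite hB5; rewrite hB6; rewrite hC2; rewrite hC3; rewrite hC4; rewrite hC5; rewrite hC6; rewrite hE3; rewrite hE4; rewrite hE5; rewrite hE6; ring.
Qed.

Lemma cancel_l (d x y : C) : d <> 0 -> d * x = d * y -> x = y.
Proof. intros Hd H. rewrite <- (Cmult_1_l x), <- (Cmult_1_l y), <- (Cinv_l d Hd), <- !Cmult_assoc, H. reflexivity. Qed.

Lemma nC_IZR n : nC n = RtoC (IZR (Z.of_nat n)).
Proof. unfold nC. now rewrite INR_IZR_INZ. Qed.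

Lemma hc_sum (c : C) (hc : forall k : nat, c <> - nC k) k : c + nC k <> 0.
Proof. apply cplus_neq0; auto. Qed.

Lemma alg_main (a c p : C) (u : nat -> C)
  (hc : forall k : nat, c <> - nC k)
  (hc2 : c <> 2)
  (hu : forall n, u n = sA a c p n) :
  u 0%nat = 1 /\
  u 1%nat = a / c /\
  u 2%nat = / 2 * ((a ^ 2 + a) / (c ^ 2 + c) - p ^ 2) /\
  u 3%nat = a / (6 * c) * ((a + 1) * (a + 2) / ((c + 1) * (c + 2)) - 3 * p ^ 2) /\
  u 4%nat = / 24 * ( - (6 * a * (a + 1) * p ^ 2) / (c * (c + 1))
                     + a * (a + 1) * (a + 2) * (a + 3) / (c * (c + 1) * (c + 2) * (c + 3))
                     + p ^ 4) /\
  u 5%nat = a / (120 * c) * ( - (10 * (a + 1) * (a + 2) * p ^ 2) / ((c + 1) * (c + 2))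
                     + (a + 1) * (a + 2) * (a + 3) * (a + 4) / ((c + 1) * (c + 2) * (c + 3) * (c + 4))
                     + 5 * p ^ 4) /\
  (forall n : nat, (5 <= n)%nat ->
     u (S n) = beta0 a c n * u n + beta1 a c p n * u (n - 1)%nat
             + beta2 a c p n * u (n - 2)%nat + beta3 a c p n * u (n - 3)%nat
             + beta4 a c p n * u (n - 4)%nat + beta5 a c p n * u (n - 5)%nat).
Proof.
  assert (h0 : c <> 0). { intro H. apply (hc 0%nat). rewrite H. unfold nC. simpl. apply injective_projections; simpl; ring. }
  assert (h1 := hc_sum c hc 1). assert (h2 := hc_sum c hc 2). assert (h3 := hc_sum c hc 3).
  assert (h4 := hc_sum c hc 4).
  rewrite !nC_IZR in h1, h2, h3, h4. simpl Z.of_nat in h1, h2, h3, h4.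
  assert (h00 : c + 0 <> 0). { now rewrite Cplus_0_r. }
  assert (h01 : c * c + c <> 0). { replace (c * c + c) with (c * (c + 1)) by ring. now apply Cmult_neq_0. }
  repeat split; try (rewrite hu; unfold sA, conv, co, mk; simpl; rewrite ?nC_IZR; simpl Z.of_nat;
     field; repeat split; auto; fail).
  intros n Hn. destruct n as [|[|[|[|[|k]]]]]; try lia. clear Hn.
  cbn [Nat.sub]. rewrite Nat.sub_0_r. rewrite !hu.
    pose proof (RA a c p (S (S k))) as hA2.
    pose proof (RB a c p hc (S k)) as hB2.
    pose proof (RC a c p k) as hC2.
    pose proof (RE a c p hc k) as hE2.
    pose proof (RA a c p (S (S (S k)))) as hA3.
    pose proof (RB a c p hc (S (S k))) as hB3.
    pose proof (RC a c p (S k)) as hC3.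
    pose proof (RE a c p hc (S k)) as hE3.
    pose proof (RA a c p (S (S (S (S k))))) as hA4.
    pose proof (RB a c p hc (S (S (S k)))) as hB4.
    pose proof (RC a c p (S (S k))) as hC4.
    pose proof (RE a c p hc (S (S k))) as hE4.
    pose proof (RA a c p (S (S (S (S (S k)))))) as hA5.
    pose proof (RB a c p hc (S (S (S (S k))))) as hB5.
    pose proof (RC a c p (S (S (S k)))) as hC5.
    pose proof (RE a c p hc (S (S (S k)))) as hE5.
    pose proof (RA a c p (S (S (S (S (S (S k))))))) as hA6.
    pose proof (RB a c p hc (S (S (S (S (S k)))))) as hB6.
    pose proof (RC a c p (S (S (S (S k))))) as hC6.
    pose proof (RE a c p hc (S (S (S (S k))))) as hE6.
    rewrite !nC_S in hA2. rewrite !nC_S in hA3. rewrite !nC_S in hA4. rewrite !nC_S in hA5. rewrite !nC_S in hA6. rewrite !nC_S in hB2. rewrite !nC_S in hB3. rewrite !nC_S in hB4. rewrite !nC_S in hB5. rewrite !nC_S in hB6. rewrite !nC_S in hC2. rewrite !nC_S in hC3. rewrite !nC_S in hC4. rewrite !nC_S in hC5. rewrite !nC_S in hC6. rewrite !nC_S in hE2. rewrite !nC_S in hE3. rewrite !nC_S in hE4. rewrite !nC_S in hE5. rewrite !nC_S in hE6.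
    pose proof (cert a c p (nC k) (sA a c p k) (sA a c p (S k)) (sA a c p (S (S k))) (sA a c p (S (S (S k)))) (sA a c p (S (S (S (S k))))) (sA a c p (S (S (S (S (S k)))))) (sA a c p (S (S (S (S (S (S k))))))) (sB a c p k) (sB a c p (S k)) (sB a c p (S (S k))) (sB a c p (S (S (S k)))) (sB a c p (S (S (S (S k))))) (sB a c p (S (S (S (S (S k)))))) (sB a c p (S (S (S (S (S (S k))))))) (sC' a c p k) (sC' a c p (S k)) (sC' a c p (S (S k))) (sC' a c p (S (S (S k)))) (sC' a c p (S (S (S (S k))))) (sC' a c p (S (S (S (S (S k)))))) (sC' a c p (S (S (S (S (S (S k))))))) (sE a c p k) (sE a c p (S k)) (sE a c p (S (S k))) (sE a c p (S (S (S k)))) (sE a c p (S (S (S (S k))))) (sE a c p (S (S (S (S (S k)))))) (sE a c p (S (S (S (S (S (S k))))))) hA2 hA3 hA4 hA5 hA6 hB2 hB3 hB4 hB5 hB6 hC2 hC3 hC4 hC5 hC6 hE2 hE3 hE4 hE5 hE6) as Hc.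
  assert (hk5 : c + (nC k + 1 + 1 + 1 + 1 + 1) <> 0).
  { assert (H := hc_sum c hc (S (S (S (S (S k)))))). now rewrite !nC_S in H. }
  assert (hk4 : c + (nC k + 1 + 1 + 1 + 1 + 1) - 1 <> 0).
  { assert (H := hc_sum c hc (S (S (S (S k))))). rewrite !nC_S in H.
    replace (c + (nC k + 1 + 1 + 1 + 1 + 1) - 1) with (c + (nC k + 1 + 1 + 1 + 1)) by ring. exact H. }
  assert (hc2' : c - 2 <> 0). { intro H. apply hc2. rewrite <- (Cplus_0_l 2), <- H. ring. }
  apply (cancel_l (Dn c (S (S (S (S (S k))))))).
  { unfold Dn. rewrite !nC_S. repeat apply Cmult_neq_0; try nz; auto. }
  unfold Dn at 1. rewrite !nC_S. rewrite Hc.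
  unfold beta0, beta1, beta2, beta3, beta4, beta5, Dn. rewrite !nC_S.
  field. cbv beta. repeat split; auto; nz.
Qed.

Lemma csum_is (a : nat -> C) (l : C) :
  @is_series C_AbsRing C_NormedModule a l -> csum a = l.
Proof.
  intro H. unfold csum.
  set (F := filtermap (fun N => @sum_n C_AbelianMonoid a N) eventually).
  assert (FF : ProperFilter F) by (apply filtermap_proper_filter; apply eventually_filter).
  assert (HF : forall eps : posreal, F (@ball C_NormedModule l eps)).
  { intro eps. apply H. apply locally_ball. }
  assert (Hc : @cauchy C_CompleteNormedModule F).
  { intro eps. exists l. apply HF. }
  assert (HL := @complete_cauchy C_CompleteNormedModule F FF Hc).
  refine (@eq_close C_AbsRing C_NormedModule _ l _). intro eps.
  assert (eps2 : (0 < eps / 2)%R) by (destruct eps; simpl; lra).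
  set (e2 := mkposreal _ eps2).
  assert (Hb := filter_and _ _ (HF e2) (HL e2)).
  destruct (filter_ex _ Hb) as [x [H1 H2]].
  replace (pos eps) with (pos e2 + pos e2)%R by (simpl; lra).
  eapply ball_triangle. exact H2. apply ball_sym. exact H1.
Qed.

Lemma sum_n_Re (f : nat -> C) n :
  Re (@sum_n C_AbelianMonoid f n) = @sum_n R_AbelianMonoid (fun k => Re (f k)) n.
Proof. induction n. - now rewrite !sum_O. - rewrite !sum_Sn, <- IHn. reflexivity. Qed.
Lemma sum_n_Im (f : nat -> C) n :
  Im (@sum_n C_AbelianMonoid f n) = @sum_n R_AbelianMonoid (fun k => Im (f k)) n.
Proof. induction n. - now rewrite !sum_O. - rewrite !sum_Sn, <- IHn. reflexivity. Qed.

Lemma C_series_iff (f : nat -> C) (l : C) :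
  @is_series C_AbsRing C_NormedModule f l <->
  (@is_series R_AbsRing R_NormedModule (fun n => Re (f n)) (Re l) /\
   @is_series R_AbsRing R_NormedModule (fun n => Im (f n)) (Im l)).
Proof.
  unfold is_series. split.
  - intro H. assert (H' := proj1 (filterlim_locally _ _) H).
    split; apply filterlim_locally; intro eps; generalize (H' eps); apply filter_imp;
    intros n [h1 h2].
    + rewrite <- sum_n_Re. exact h1.
    + rewrite <- sum_n_Im. exact h2.
  - intros [H1 H2]. apply filterlim_locally. intro eps.
    assert (H1' := proj1 (filterlim_locally _ _) H1 eps).
    assert (H2' := proj1 (filterlim_locally _ _) H2 eps).
    generalize (filter_and _ _ H1' H2'). apply filter_imp. intros n [h1 h2].
    split.
    + change (ball (Re l) eps (Re (sum_n f n))). rewrite sum_n_Re. exact h1.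
    + change (ball (Im l) eps (Im (sum_n f n))). rewrite sum_n_Im. exact h2.
Qed.

Lemma Re_sC (h : nat -> C) n : Re (sC h n) = sum_f_R0 (fun k => Re (h k)) n.
Proof. induction n. - reflexivity. - simpl sC. simpl sum_f_R0. rewrite <- IHn. reflexivity. Qed.
Lemma Im_sC (h : nat -> C) n : Im (sC h n) = sum_f_R0 (fun k => Im (h k)) n.
Proof. induction n. - reflexivity. - simpl sC. simpl sum_f_R0. rewrite <- IHn. reflexivity. Qed.
Lemma sumR_plus (f g : nat -> R) n : sum_f_R0 (fun k => f k + g k)%R n = (sum_f_R0 f n + sum_f_R0 g n)%R.
Proof. induction n; simpl. - reflexivity. - rewrite IHn. ring. Qed.
Lemma sumR_minus (f g : nat -> R) n : sum_f_R0 (fun k => f k - g k)%R n = (sum_f_R0 f n - sum_f_R0 g n)%R.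
Proof. induction n; simpl. - reflexivity. - rewrite IHn. ring. Qed.

Lemma im_le_Cmod' (z : C) : (Rabs (Im z) <= Cmod z)%R.
Proof. unfold Cmod. rewrite <- sqrt_Rsqr_abs. apply sqrt_le_1_alt. unfold Rsqr, Im. simpl. nra. Qed.

Lemma exs_re (f : nat -> C) : @ex_series R_AbsRing R_NormedModule (fun n => Cmod (f n)) ->
  @ex_series R_AbsRing R_NormedModule (fun n => Rabs (Re (f n))).
Proof. intro H. apply (@ex_series_le R_AbsRing R_CompleteNormedModule _ (fun n => Cmod (f n))); [|exact H].
  intro n. change (Rabs (Rabs (Re (f n))) <= Cmod (f n))%R. rewrite Rabs_Rabsolu. apply re_le_Cmod. Qed.
Lemma exs_im (f : nat -> C) : @ex_series R_AbsRing R_NormedModule (fun n => Cmod (f n)) ->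
  @ex_series R_AbsRing R_NormedModule (fun n => Rabs (Im (f n))).
Proof. intro H. apply (@ex_series_le R_AbsRing R_CompleteNormedModule _ (fun n => Cmod (f n))); [|exact H].
  intro n. change (Rabs (Rabs (Im (f n))) <= Cmod (f n))%R. rewrite Rabs_Rabsolu. apply im_le_Cmod'. Qed.

Lemma cauchy_C (f g : nat -> C) (lf lg : C) :
  @is_series C_AbsRing C_NormedModule f lf -> @is_series C_AbsRing C_NormedModule g lg ->
  @ex_series R_AbsRing R_NormedModule (fun n => Cmod (f n)) ->
  @ex_series R_AbsRing R_NormedModule (fun n => Cmod (g n)) ->
  @is_series C_AbsRing C_NormedModule (fun n => sC (fun k => f k * g (n - k)%nat) n) (lf * lg).
Proof.
  intros Hf Hg Af Ag.
  apply C_series_iff in Hf. apply C_series_iff in Hg. destruct Hf as [Hf1 Hf2], Hg as [Hg1 Hg2].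
  assert (Af1 := exs_re f Af). assert (Af2 := exs_im f Af).
  assert (Ag1 := exs_re g Ag). assert (Ag2 := exs_im g Ag).
  apply C_series_iff. split.
  - assert (M1 := is_series_mult _ _ _ _ Hf1 Hg1 Af1 Ag1).
    assert (M2 := is_series_mult _ _ _ _ Hf2 Hg2 Af2 Ag2).
    assert (M := is_series_minus _ _ _ _ M1 M2).
    replace (Re (lf * lg)) with (Re lf * Re lg - Im lf * Im lg)%R by (unfold Re, Im; simpl; ring).
    revert M. apply is_series_ext. intro n. rewrite Re_sC.
    change (sum_f_R0 (fun k => Re (f k) * Re (g (n - k)%nat)) n - sum_f_R0 (fun k => Im (f k) * Im (g (n - k)%nat)) n =
       sum_f_R0 (fun k => Re (f k * g (n - k)%nat)) n)%R.
    rewrite <- sumR_minus. reflexivity.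
  - assert (M1 := is_series_mult _ _ _ _ Hf1 Hg2 Af1 Ag2).
    assert (M2 := is_series_mult _ _ _ _ Hf2 Hg1 Af2 Ag1).
    assert (M := is_series_plus _ _ _ _ M1 M2).
    replace (Im (lf * lg)) with (Re lf * Im lg + Im lf * Re lg)%R by (unfold Re, Im; simpl; ring).
    revert M. apply is_series_ext. intro n. rewrite Im_sC.
    change (sum_f_R0 (fun k => Re (f k) * Im (g (n - k)%nat)) n + sum_f_R0 (fun k => Im (f k) * Re (g (n - k)%nat)) n =
       sum_f_R0 (fun k => Im (f k * g (n - k)%nat)) n)%R.
    rewrite <- sumR_plus. reflexivity.
Qed.

Lemma ratio_ex (r : nat -> R) (N : nat) : (forall n, 0 <= r n)%R ->
  (forall n, (N <= n)%nat -> r (S n) <= r n / 2)%R ->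
  @ex_series R_AbsRing R_NormedModule r.
Proof.
  intros Hpos Hr. apply (proj2 (@ex_series_incr_n R_AbsRing R_NormedModule r N)).
  apply (@ex_series_le R_AbsRing R_CompleteNormedModule _ (fun k => r N * (/2)^k)%R).
  - intro k. change (Rabs (r (N + k)%nat) <= r N * (/ 2) ^ k)%R. rewrite Rabs_pos_eq by apply Hpos.
    induction k.
    + rewrite Nat.add_0_r. simpl. rewrite Rmult_1_r. apply Rle_refl.
    + replace (N + S k)%nat with (S (N + k)) by lia.
      specialize (Hr (N + k)%nat ltac:(lia)). simpl.
      replace (r N * (/ 2 * (/ 2) ^ k))%R with ((r N * (/ 2) ^ k) / 2)%R by field. lra.
  - apply (@ex_series_ext R_AbsRing R_NormedModule (fun k => scal (r N) ((/2)^k)%R)).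
    + intro k. reflexivity.
    + apply (@ex_series_scal_l R_AbsRing R_NormedModule). apply ex_series_geom. rewrite Rabs_pos_eq; lra.
Qed.

Lemma sumR_nonneg (f : nat -> R) N : (forall k, 0 <= f k)%R -> (0 <= sum_f_R0 f N)%R.
Proof. intro H. induction N; simpl. - apply H. - specialize (H (S N)). lra. Qed.
Lemma sumR_ge_term (f : nat -> R) N n : (forall k, 0 <= f k)%R -> (n <= N)%nat -> (f n <= sum_f_R0 f N)%R.
Proof. intros H Hn. induction N; simpl.
  - replace n with 0%nat by lia. lra.
  - destruct (Nat.eq_dec n (S N)) as [->|Hne].
    + assert (H0 := sumR_nonneg f N H). lra.
    + assert (H1 : (n <= N)%nat) by lia. specialize (IHN H1). specialize (H (S N)). lra.
Qed.

Lemma uniqR (r : nat -> R) :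
  (forall x : R, @is_series R_AbsRing R_NormedModule (fun n => r n * x ^ n)%R 0%R) -> forall n, r n = 0%R.
Proof.
  intros H n.
  assert (Hps : forall x, PSeries r x = 0%R).
  { intro x. apply is_pseries_unique. apply is_pseries_R. apply H. }
  assert (Hrad : Rbar_lt 0 (CV_radius r)).
  { assert (H1 : @ex_series R_AbsRing R_NormedModule r).
    { exists 0%R. apply (is_series_ext (fun n => r n * 1 ^ n)%R). intro k. rewrite pow1, Rmult_1_r. reflexivity. apply H. }
    assert (Hl := ex_series_lim_0 r H1).
    apply is_lim_seq_spec in Hl. destruct (Hl (mkposreal 1 Rlt_0_1)) as [N HN]. simpl in HN.
    assert (Hb : exists M, forall k, (Rabs (r k * 1 ^ k) <= M)%R).
    { exists (1 + sum_f_R0 (fun k => Rabs (r k)) N)%R. intro k. rewrite pow1, Rmult_1_r.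
      assert (Hs := sumR_nonneg (fun k => Rabs (r k)) N (fun k => Rabs_pos (r k))).
      destruct (Nat.le_gt_cases N k) as [Hk|Hk].
      - specialize (HN k Hk). rewrite Rminus_0_r in HN. lra.
      - assert (Ht := sumR_ge_term (fun k => Rabs (r k)) N k (fun k => Rabs_pos (r k)) ltac:(lia)).
        simpl in Ht. lra. }
    assert (Hle := proj1 (CV_radius_bounded r) 1%R Hb).
    apply (Rbar_lt_le_trans _ 1%R); [simpl; lra | exact Hle]. }
  apply (PSeries_ext_recip r (fun _ => 0%R) n Hrad).
  - rewrite CV_radius_const_0. simpl. exact I.
  - apply filter_forall. intro x. rewrite Hps, PSeries_const_0. reflexivity.
Qed.

Lemma exists_nat_ge (X : R) : exists N : nat, (X <= INR N)%R.
Proof. destruct (Rle_lt_dec 0 X) as [H|H].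
  - destruct (nfloor_ex X H) as [n [_ Hn]]. exists (S n). rewrite S_INR. lra.
  - exists 0%nat. simpl. lra. Qed.

Lemma Cmod_nC n : Cmod (nC n) = INR n.
Proof. unfold nC. rewrite Cmod_R. apply Rabs_pos_eq. apply pos_INR. Qed.

Lemma ratio_C (t : nat -> C) (N : nat) :
  (forall n, (N <= n)%nat -> Cmod (t (S n)) <= Cmod (t n) / 2)%R ->
  @ex_series R_AbsRing R_NormedModule (fun n => Cmod (t n)).
Proof. intro H. apply (ratio_ex _ N); auto. intro n. apply Cmod_ge_0. Qed.

Lemma mk_step a c (hc : forall k : nat, c <> - nC k) z n :
  mk a c (S n) * z ^ (S n) = (mk a c n * z ^ n) * ((a + nC n) * z / ((c + nC n) * nC (S n))).
Proof. unfold mk. simpl poch. change (fact (S n)) with (S n * fact n)%nat.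
  rewrite nC_mult. simpl Cpow.
  assert (H1 := nC_fact_neq0 n). assert (H2 := nC_S_neq0 n).
  assert (H3 := poch_neq0 c hc n). assert (H4 := cplus_neq0 c hc n).
  field. repeat split; auto. Qed.

Lemma kummer_abs a c (hc : forall k : nat, c <> - nC k) z :
  @ex_series R_AbsRing R_NormedModule (fun n => Cmod (mk a c n * z ^ n)).
Proof.
  set (A := Cmod a). set (Zm := Cmod z). set (Cc := Cmod c).
  assert (HA : (0 <= A)%R) by apply Cmod_ge_0. assert (HZ : (0 <= Zm)%R) by apply Cmod_ge_0.
  assert (HC : (0 <= Cc)%R) by apply Cmod_ge_0.
  destruct (exists_nat_ge (2 * Cc + 4 * Zm * (A + 1) + 1)) as [N HN].
  apply (ratio_C _ N). intros n Hn.
  rewrite mk_step by auto. rewrite Cmod_mult.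
  assert (HT : (0 <= Cmod (mk a c n * z ^ n))%R) by apply Cmod_ge_0.
  set (T := Cmod (mk a c n * z ^ n)) in *.
  assert (HZA : (0 <= Zm * (A + 1))%R) by (apply Rmult_le_pos; lra).
  set (x := INR n).
  assert (Hx : (INR N <= x)%R) by (apply le_INR; exact Hn).
  assert (HP : (Cmod (a + nC n) <= A + x)%R).
  { eapply Rle_trans. apply Cmod_triangle. rewrite Cmod_nC. fold A x. lra. }
  assert (HQ : (x - Cc <= Cmod (c + nC n))%R).
  { assert (Ht := Cmod_triangle (c + nC n) (- c)). replace (c + nC n + - c) with (nC n) in Ht by ring.
    rewrite Cmod_nC, Cmod_opp in Ht. fold Cc in Ht. fold x in Ht. lra. }
  assert (H4 := cplus_neq0 c hc n). assert (H5 := nC_S_neq0 n).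
  rewrite Cmod_div by (apply Cmult_neq_0; auto).
  rewrite !Cmod_mult, Cmod_nC, S_INR. fold x Zm.
  set (P := Cmod (a + nC n)) in *. set (Q := Cmod (c + nC n)) in *.
  assert (HP0 : (0 <= P)%R) by apply Cmod_ge_0.
  assert (HQ1 : (x / 2 <= Q)%R) by lra.
  assert (Hx0 : (0 < x)%R) by lra.
  assert (HD : (0 < Q * (x + 1))%R) by (apply Rmult_lt_0_compat; lra).
  assert (Hkey : (2 * (P * Zm) <= Q * (x + 1))%R).
  { assert (h1 : (2 * (P * Zm) <= 2 * ((A + x) * Zm))%R) by (apply Rmult_le_compat_l; [lra|]; apply Rmult_le_compat_r; lra).
    assert (h2 : (2 * ((A + x) * Zm) <= 2 * (Zm * (A + 1)) * (x + 1))%R).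
    { assert (E : (2 * (Zm * (A + 1)) * (x + 1) - 2 * ((A + x) * Zm) = 2 * (Zm * (A * x + 1)))%R) by ring.
      assert (E2 : (0 <= Zm * (A * x + 1))%R) by (apply Rmult_le_pos; [lra|]; assert (0 <= A * x)%R by (apply Rmult_le_pos; lra); lra).
      lra. }
    assert (h3 : (2 * (Zm * (A + 1)) <= x / 2)%R) by lra.
    assert (h4 : (2 * (Zm * (A + 1)) * (x + 1) <= x / 2 * (x + 1))%R) by (apply Rmult_le_compat_r; lra).
    assert (h5 : (x / 2 * (x + 1) <= Q * (x + 1))%R) by (apply Rmult_le_compat_r; lra).
    lra. }
  assert (Hr : (P * Zm / (Q * (x + 1)) <= / 2)%R).
  { unfold Rdiv. apply (Rmult_le_reg_r (Q * (x + 1))); [exact HD|].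
    rewrite Rmult_assoc, Rinv_l by lra. lra. }
  replace (T / 2)%R with (T * / 2)%R by (unfold Rdiv; ring).
  apply Rmult_le_compat_l; [exact HT|exact Hr].
Qed.

Lemma exC_abs (t : nat -> C) : @ex_series R_AbsRing R_NormedModule (fun n => Cmod (t n)) ->
  exists l, @is_series C_AbsRing C_NormedModule t l.
Proof. intro H.
  assert (H' : @ex_series C_AbsRing C_CompleteNormedModule t).
  { apply (@ex_series_le C_AbsRing C_CompleteNormedModule t (fun n => Cmod (t n))); [|exact H].
    intro n. apply Rle_refl. }
  exact H'. Qed.

Lemma kummer_is a c (hc : forall k : nat, c <> - nC k) z :
  @is_series C_AbsRing C_NormedModule (fun n => mk a c n * z ^ n) (kummerM a c z).
Proof. destruct (exC_abs _ (kummer_abs a c hc z)) as [l Hl].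
  replace (kummerM a c z) with l; [exact Hl|]. symmetry. apply csum_is. exact Hl. Qed.

Lemma Cpow_mult (x y : C) n : (x * y) ^ n = x ^ n * y ^ n.
Proof. induction n; simpl. - ring. - rewrite IHn. ring. Qed.

Definition cw (w : C) (k : nat) : C := (-1) ^ k * w ^ (2 * k) / nC (fact (2 * k)).

Lemma cw_step w k : cw w (S k) = cw w k * (- (w ^ 2) / (nC (S (2 * k)) * nC (S (S (2 * k))))).
Proof. unfold cw. replace (2 * S k)%nat with (S (S (2 * k))) by lia.
  change (fact (S (S (2 * k)))) with (S (S (2 * k)) * (S (2 * k) * fact (2 * k)))%nat.
  rewrite !nC_mult. simpl Cpow.
  assert (H1 := nC_fact_neq0 (2 * k)). assert (H2 := nC_S_neq0 (2 * k)). assert (H3 := nC_S_neq0 (S (2 * k))).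
  field. repeat split; auto. Qed.

Lemma cw_abs w : @ex_series R_AbsRing R_NormedModule (fun k => Cmod (cw w k)).
Proof.
  destruct (exists_nat_ge (Cmod w ^ 2)) as [N HN].
  apply (ratio_C _ N). intros k Hk. rewrite cw_step, Cmod_mult.
  assert (H2 := nC_S_neq0 (2 * k)). assert (H3 := nC_S_neq0 (S (2 * k))).
  rewrite Cmod_div by (apply Cmult_neq_0; auto).
  rewrite Cmod_opp, Cmod_pow, Cmod_mult, !Cmod_nC, !S_INR, mult_INR.
  assert (Hx : (INR N <= INR k)%R) by (apply le_INR; exact Hk).
  assert (HT : (0 <= Cmod (cw w k))%R) by apply Cmod_ge_0.
  set (T := Cmod (cw w k)) in *. set (W := (Cmod w ^ 2)%R) in *. set (x := INR k) in *.
  assert (Hx0 : (0 <= x)%R) by apply pos_INR.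
  simpl INR.
  assert (HD : (0 < (2 * x + 1) * (2 * x + 1 + 1))%R) by nra.
  assert (Hr : (W / ((2 * x + 1) * (2 * x + 1 + 1)) <= / 2)%R).
  { unfold Rdiv. apply (Rmult_le_reg_r ((2 * x + 1) * (2 * x + 1 + 1))); [exact HD|].
    rewrite Rmult_assoc, Rinv_l by lra. nra. }
  replace (T / 2)%R with (T * / 2)%R by (unfold Rdiv; ring).
  apply Rmult_le_compat_l; [exact HT|exact Hr].
Qed.

Lemma interleave {G : AbelianMonoid} (g w : nat -> G) :
  (forall k, g (2 * k)%nat = w k) -> (forall k, g (S (2 * k)) = zero) ->
  forall N, sum_n g N = sum_n w (Nat.div2 N).
Proof.
  intros He Ho.
  assert (H : forall K, sum_n g (2 * K)%nat = sum_n w K /\ sum_n g (S (2 * K)) = sum_n w K).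
  { induction K.
    - assert (E0 := He 0%nat). assert (O0 := Ho 0%nat). simpl in E0, O0. simpl.
      rewrite sum_Sn, !sum_O, E0, O0. split; [reflexivity|apply plus_zero_r].
    - destruct IHK as [_ IH2]. replace (2 * S K)%nat with (S (S (2 * K))) by lia.
      split.
      + rewrite (sum_Sn g (S (2 * K))), IH2, (sum_Sn w K).
        replace (S (S (2 * K))) with (2 * S K)%nat by lia. now rewrite He.
      + rewrite (sum_Sn g (S (S (2 * K)))), (sum_Sn g (S (2 * K))), IH2, (sum_Sn w K).
        replace (S (S (2 * K))) with (2 * S K)%nat by lia. rewrite He, Ho. apply plus_zero_r. }
  intro N. pose proof (Nat.div2_odd N) as E. destruct (Nat.odd N); simpl Nat.b2n in E.
  - rewrite E at 1. replace (2 * Nat.div2 N + 1)%nat with (S (2 * Nat.div2 N)) by lia. apply H.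
  - rewrite E at 1. rewrite Nat.add_0_r. apply H.
Qed.

Lemma filterlim_div2 : filterlim Nat.div2 eventually eventually.
Proof. intros P [N HN]. exists (2 * N)%nat. intros m Hm. apply HN.
  pose proof (Nat.div2_odd m) as E. destruct (Nat.odd m); simpl in E; lia. Qed.

Lemma co_even p z k : co p (2 * k) * z ^ (2 * k) = cw (p * z) k.
Proof. unfold co, cw. rewrite Nat.even_mul. simpl Nat.even. rewrite Nat.div2_double.
  rewrite Cpow_mult. simpl orb. cbv iota. field. apply nC_fact_neq0. Qed.
Lemma co_odd p z k : co p (S (2 * k)) * z ^ (S (2 * k)) = 0.
Proof. unfold co. rewrite Nat.even_succ, Nat.odd_mul. simpl. ring. Qed.

Lemma cos_is p z : @is_series C_AbsRing C_NormedModule (fun n => co p n * z ^ n) (ccos (p * z)).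
Proof. destruct (exC_abs _ (cw_abs (p * z))) as [l Hl].
  replace (ccos (p * z)) with l.
  2:{ symmetry. apply csum_is. exact Hl. }
  unfold is_series.
  apply (filterlim_ext (fun N => @sum_n C_AbelianMonoid (cw (p * z)) (Nat.div2 N))).
  - intro N. symmetry. apply (@interleave C_AbelianMonoid (fun n => co p n * z ^ n) (cw (p * z))).
    + intro k. apply co_even. + intro k. apply co_odd.
  - eapply filterlim_comp. apply filterlim_div2. exact Hl.
Qed.

Lemma cos_abs p z : @ex_series R_AbsRing R_NormedModule (fun n => Cmod (co p n * z ^ n)).
Proof. destruct (cw_abs (p * z)) as [l Hl]. exists l.
  unfold is_series.
  apply (filterlim_ext (fun N => @sum_n R_AbelianMonoid (fun k => Cmod (cw (p * z) k)) (Nat.div2 N))).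
  - intro N. symmetry. apply (@interleave R_AbelianMonoid (fun n => Cmod (co p n * z ^ n)) (fun k => Cmod (cw (p * z) k))).
    + intro k. now rewrite co_even. + intro k. rewrite co_odd. apply Cmod_0.
  - eapply filterlim_comp. apply filterlim_div2. exact Hl.
Qed.

Lemma uniqC (d : nat -> C) :
  (forall x : R, @is_series C_AbsRing C_NormedModule (fun n => d n * (RtoC x) ^ n) (RtoC 0)) -> forall n, d n = 0.
Proof.
  intros H n.
  assert (H1 : forall k, Re (d k) = 0%R).
  { apply uniqR. intro x. destruct (proj1 (C_series_iff _ _) (H x)) as [Hr _].
    revert Hr. apply is_series_ext. intro k. rewrite <- RtoC_pow. unfold Re, Im. simpl. ring. }
  assert (H2 : forall k, Im (d k) = 0%R).
  { apply uniqR. intro x. destruct (proj1 (C_series_iff _ _) (H x)) as [_ Hr].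
    revert Hr. apply is_series_ext. intro k. rewrite <- RtoC_pow. unfold Re, Im. simpl. ring. }
  specialize (H1 n). specialize (H2 n). unfold Re, Im in *. destruct (d n) as [r i]. simpl in *.
  subst. reflexivity.
Qed.

Lemma prod_is a c p (hc : forall k : nat, c <> - nC k) z :
  @is_series C_AbsRing C_NormedModule (fun n => sA a c p n * z ^ n) (ccos (p * z) * kummerM a c z).
Proof.
  assert (M := cauchy_C (fun n => co p n * z ^ n) (fun n => mk a c n * z ^ n) _ _
     (cos_is p z) (kummer_is a c hc z) (cos_abs p z) (kummer_abs a c hc z)).
  revert M. apply is_series_ext. intro n. unfold sA, conv.
  rewrite Cmult_comm, <- sumC_scal. apply sumC_ext. intros k Hk.
  replace (z ^ n) with (z ^ k * z ^ (n - k)%nat).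
  - ring.
  - rewrite <- Cpow_add_r. f_equal. lia.
Qed.

Lemma is_series_C_sub (f g : nat -> C) (l : C) :
  @is_series C_AbsRing C_NormedModule f l -> @is_series C_AbsRing C_NormedModule g l ->
  @is_series C_AbsRing C_NormedModule (fun n => f n - g n) (RtoC 0).
Proof. intros H1 H2. assert (H := is_series_minus _ _ _ _ H1 H2).
  replace (RtoC 0) with (l + - l) by ring. exact H. Qed.

Lemma u_eq (a c p : C) (u : nat -> C) (hc : forall k : nat, c <> - nC k)
  (hu : forall z : C,
      @is_series C_AbsRing C_NormedModule (fun n => u n * z ^ n)
        (ccos (p * z) * kummerM a c z)) :
  forall n, u n = sA a c p n.
Proof.
  intro n. apply eq_of_sub. apply (uniqC (fun n => u n - sA a c p n)). intro x.
  assert (H := is_series_C_sub _ _ _ (hu (RtoC x)) (prod_is a c p hc (RtoC x))).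
  revert H. apply is_series_ext. intro k. simpl. ring.
Qed.
Theorem theorem2p8 (a c p : C) (u : nat -> C)
  (hc : forall k : nat, c <> - nC k)
  (hc2 : c <> 2)
  (hu : forall z : C,
      @is_series C_AbsRing C_NormedModule (fun n => u n * z ^ n)
        (ccos (p * z) * kummerM a c z)) :
  u 0%nat = 1 /\
  u 1%nat = a / c /\
  u 2%nat = / 2 * ((a ^ 2 + a) / (c ^ 2 + c) - p ^ 2) /\
  u 3%nat = a / (6 * c) * ((a + 1) * (a + 2) / ((c + 1) * (c + 2)) - 3 * p ^ 2) /\
  u 4%nat = / 24 * ( - (6 * a * (a + 1) * p ^ 2) / (c * (c + 1))
                     + a * (a + 1) * (a + 2) * (a + 3) / (c * (c + 1) * (c + 2) * (c + 3))
                     + p ^ 4) /\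
  u 5%nat = a / (120 * c) * ( - (10 * (a + 1) * (a + 2) * p ^ 2) / ((c + 1) * (c + 2))
                     + (a + 1) * (a + 2) * (a + 3) * (a + 4) / ((c + 1) * (c + 2) * (c + 3) * (c + 4))
                     + 5 * p ^ 4) /\
  (forall n : nat, (5 <= n)%nat ->
     u (S n) = beta0 a c n * u n + beta1 a c p n * u (n - 1)%nat
             + beta2 a c p n * u (n - 2)%nat + beta3 a c p n * u (n - 3)%nat
             + beta4 a c p n * u (n - 4)%nat + beta5 a c p n * u (n - 5)%nat).
Proof.
  exact (alg_main a c p u hc hc2 (u_eq a c p u hc hu)).
Qed.
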